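(* Let $n\ge m\ge1$ and let $n_1,\dots,n_m$ be positive integers with $\sum_{k=1}^m n_k=n$. Then for every $t\in[0,1]$, $$\sum_{k=1}^m\sum_{i=0}^{n_k-1}\log\Bigl(1-t\frac{i}{n_k}\Bigr)-\sum_{i=0}^{n-1}\log\Bigl(1-t\frac{i}{n}\Bigr)\ge\frac{m-1}{2}\,t.$$ *)

(* Defs.v *)
From mathcomp Require Import all_boot all_order all_algebra.
From mathcomp Require Import reals exp.

(* Main.v *)
Require Import Defs.
From mathcomp Require Import all_boot all_order all_algebra.
From mathcomp Require Import reals exp ring lra.
Import Order.TTheory GRing.Theory Num.Theory.
Local Open Scope ring_scope.

Lemma ptwise (R : realType) (t x y : R) : 0 <= t -> t <= 1 -> 0 <= x -> x <= y -> y < 1 ->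
  t * (y - x) <= ln (1 - t * x) - ln (1 - t * y).
Proof.
move=> t0 t1 x0 xy y1.
have ty1 : t * y < 1.
  have : t * y <= y by rewrite ler_piMl // (le_trans x0 xy).
  by move/le_lt_trans; apply.
have tx : t * x <= t * y by rewrite ler_wpM2l.
have u0 : 0 < 1 - t * x by rewrite subr_gt0 (le_lt_trans tx ty1).
have v0 : 0 < 1 - t * y by rewrite subr_gt0.
have u1 : 1 - t * x <= 1 by rewrite lerBlDr lerDl mulr_ge0.
set u := 1 - t * x in u0 u1 *; set v := 1 - t * y in v0 *.
have vu : v <= u by rewrite /u /v lerB.
have h1 : ln (v / u) <= v / u - 1.
  have := le_ln1Dx (x := v / u - 1); rewrite [1 + _]addrC subrK; apply.
  have : 0 < v / u by rewrite divr_gt0. lra.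
rewrite ln_div ?posrE // in h1.
have h2 : v / u - 1 <= v - u.
  rewrite -[X in _ - X](divff (lt0r_neq0 u0)) -mulrBl.
  rewrite ler_pdivrMr //; nra.
have : t * (y - x) = u - v by rewrite /u /v mulrBr; lra.
move=> ->.
lra.
Qed.

Lemma sorted_count (R : realType) (ss : seq R) (j : nat) (s : R) :
  sorted <=%R ss -> (j < count (fun x : R => (x <= s)%R) ss)%N -> nth 0 ss j <= s.
Proof.
move=> so hc; have js : (j < size ss)%N by apply: leq_trans hc (count_size _ _).
rewrite leNgt; apply/negP => hs.
move: hc; rewrite -(cat_take_drop j ss) count_cat.
have -> : count (fun x => x <= s) (drop j ss) = 0%N.
  rewrite (eq_in_count (a2 := pred0)) ?count_pred0 //.
  move=> x /(nthP 0) [i]; rewrite size_drop => hi <-.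
  rewrite nth_drop /=; apply/negbTE; rewrite -ltNge.
  apply: (lt_le_trans hs); apply: (sorted_leq_nth le_trans lexx 0 so).
  - by rewrite inE.
  - by rewrite inE -ltn_subRL.
  - by rewrite leq_addr.
rewrite addn0 => h; have := leq_trans h (count_size _ _).
by rewrite size_take js ltnn.
Qed.

Lemma size_flat (T : Type) (ss : seq (seq T)) : size (flatten ss) = (\sum_(s <- ss) size s)%N.
Proof. by elim: ss => [|s ss IH]; rewrite ?big_nil ?big_cons //= size_cat IH. Qed.

Lemma count_flat (T : Type) (a : pred T) (ss : seq (seq T)) :
  count a (flatten ss) = (\sum_(s <- ss) count a s)%N.
Proof. by elim: ss => [|s ss IH]; rewrite ?big_nil ?big_cons //= count_cat IH. Qed.

Lemma big_iota0 (R : realType) (N : nat) (F : nat -> R) :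
  \sum_(i <- iota 0 N) F i = \sum_(i < N) F i.
Proof. by rewrite -(big_mkord xpredT) /index_iota subn0. Qed.

Lemma sumfrac (R : realType) (N : nat) : (0 < N)%N ->
  \sum_(i < N) (i%:R / N%:R : R) = (N%:R - 1) / 2.
Proof.
move=> N0; rewrite -mulr_suml.
have tri : forall M, \sum_(i < M) (i%:R : R) = M%:R * (M%:R - 1) / 2.
  elim=> [|M IH]; first by rewrite big_ord0 mul0r mul0r.
  rewrite big_ord_recr /= IH -addn1 natrD; by field.
rewrite tri; field; rewrite pnatr_eq0 -lt0n //.
Qed.

Lemma count_iota_le (R : realType) (N n j : nat) : (0 < N)%N -> (j < n)%N ->
  (((j * N) %/ n).+1 <= count (fun i : nat => ((i%:R / N%:R : R) <= j%:R / n%:R)%R) (iota 0 N))%N.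
Proof.
move=> N0 jn; have n0 : (0 < n)%N by apply: leq_ltn_trans jn.
set q := ((j * N) %/ n)%N.
have qN : (q < N)%N by rewrite /q ltn_divLR // mulnC ltn_pmul2l.
rewrite -(subnKC qN) iotaD count_cat add0n.
apply: leq_trans (leq_addr _ _).
rewrite (eq_in_count (a2 := predT)) ?count_predT ?size_iota //.
move=> i; rewrite mem_iota add0n /= ltnS => hi.
rewrite leq_divRL // in hi.
have Nr : 0 < (N%:R : R) by rewrite ltr0n.
have nr : 0 < (n%:R : R) by rewrite ltr0n.
rewrite ler_pdivrMr // mulrAC ler_pdivlMr // -!natrM ler_nat.
by rewrite subnKC.
Qed.

Theorem lemma7p13 (R : realType) (n m : nat) (nk : 'I_m -> nat)
  (hm : (1 <= m)%N) (hmn : (m <= n)%N)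
  (hpos : forall k : 'I_m, (0 < nk k)%N)
  (hsum : (\sum_(k < m) nk k)%N = n)
  (t : R) (ht0 : 0 <= t) (ht1 : t <= 1) :
  (m%:R - 1) / 2 * t <=
    \sum_(k < m) \sum_(i < nk k) ln (1 - t * (i%:R / (nk k)%:R))
    - \sum_(i < n) ln (1 - t * (i%:R / n%:R)).
Proof.
have n0 : (0 < n)%N by apply: leq_trans hmn.
set xs := flatten [seq [seq (i%:R / (nk k)%:R : R) | i <- iota 0 (nk k)] | k <- index_enum 'I_m].
have sumxs : forall F : R -> R, \sum_(x <- xs) F x = \sum_(k < m) \sum_(i < nk k) F (i%:R / (nk k)%:R).
  move=> F; rewrite big_flatten big_map /=; apply: eq_bigr => k _.
  by rewrite big_map big_iota0.
have sizexs : size xs = n.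
  rewrite size_flat big_map -hsum; apply: eq_bigr => k _.
  by rewrite size_map size_iota.
have xs0 : forall x, x \in xs -> 0 <= x.
  move=> x /flattenP [s /mapP [k _ ->]] /mapP [i _ ->].
  by rewrite divr_ge0 ?ler0n.
set ss := sort <=%R xs.
have pss : perm_eq ss xs by rewrite perm_sort perm_refl.
have sizess : size ss = n by rewrite size_sort.
have sumss : forall F : R -> R, \sum_(x <- ss) F x = \sum_(j < n) F (nth 0 ss j).
  by move=> F; rewrite (big_nth 0) sizess big_mkord.
have ss0 : forall j : 'I_n, 0 <= nth 0 ss j.
  move=> j; apply: xs0; rewrite -(perm_mem pss); apply: mem_nth.
  by rewrite sizess.
have ssle : forall j : 'I_n, nth 0 ss j <= j%:R / n%:R.
  move=> j; apply: sorted_count; first by apply: sort_sorted; exact: le_total.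
  rewrite (permP pss) count_flat big_map.
  have key : forall k : 'I_m, (((j * nk k) %/ n).+1 <= count (fun x : R => (x <= j%:R / n%:R)%R)
      [seq (i%:R / (nk k)%:R : R) | i <- iota 0 (nk k)])%N.
    by move=> k; rewrite count_map; apply: count_iota_le.
  have H2 : (j < \sum_(k < m) ((j * nk k) %/ n).+1)%N.
    rewrite -(ltn_pmul2r n0) big_distrl /=.
    have H3 : (\sum_(k < m) (j * nk k).+1 <= \sum_(k < m) ((j * nk k) %/ n).+1 * n)%N.
      by apply: leq_sum => k _; apply: ltn_ceil.
    apply: leq_trans H3.
    under eq_bigr => k _ do rewrite -addn1.
    rewrite big_split /= -big_distrr /= hsum sum_nat_const card_ord muln1.
    by rewrite -addn1 leq_add2l.
  apply: (leq_trans H2); apply: leq_sum => k _; exact: key k.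
have ptw : forall j : 'I_n, t * (j%:R / n%:R - nth 0 ss j) <=
    ln (1 - t * nth 0 ss j) - ln (1 - t * (j%:R / n%:R)).
  move=> j; apply: ptwise => //.
  by rewrite ltr_pdivrMr ?ltr0n // mul1r ltr_nat.
have eA := sumxs (fun x => ln (1 - t * x)).
rewrite -eA -(perm_big _ pss) sumss -sumrB.
apply: le_trans (ler_sum _ (fun j _ => ptw j)).
rewrite -mulr_sumr sumrB sumfrac //.
have := sumxs id; rewrite -(perm_big _ pss) sumss /= => ->.
under eq_bigr => k _ do rewrite sumfrac //.
rewrite -mulr_suml sumrB -natr_sum hsum sumr_const card_ord.
have -> : (1 *+ m : R) = m%:R by [].
lra.
Qed.
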